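(* The atom squaring function $\mathbb A^*\to\mathbb A^*$, which maps $a_1\cdots a_n$ to the concatenation of all two-letter words $a_ia_j$ for $i,j\in\{1,\ldots,n\}$ taken in lexicographic order of $(i,j)$ (i.e. $a_1a_1\,a_1a_2\cdots a_1a_n\,a_2a_1\cdots a_na_n$), is not computed by any pebble transducer with atoms that has at most two pebbles.
   Context: $\mathbb A$ is an infinite set of atoms. A pebble transducer with atoms, with input alphabet $\Sigma+\mathbb A$ and output alphabet $\Gamma+\mathbb A$ ($\Sigma,\Gamma$ finite), is given by a finite set of states $q$, each with a stack height $\dim(q)\in\{0,1,\ldots\}$, MSO universe formulas $\varphi_q(x_1,\ldots,x_{\dim(q)})$, and MSO formulas defining a linear order on configurations; all formulas are over the vocabulary $\{\le\}\cup\{a(x):a\in\Sigma\}$ of the input string (positions carrying atoms satisfy no label predicate). A configuration on input $w$ is a pair $(q,\bar a)$ with $\bar a$ a tuple of positions of length $\dim(q)$ satisfying $\varphi_q$ (the pebble stack; its last entry is the head). Stack discipline: for any two consecutive configurations in the order, one stack is a prefix of the other, or both have equal length and agree except on the last entry. Each state has an output which is a letter of $\Gamma$ or the symbol “atom under the head”, which outputs the atom at the head position if it carries an atom and the empty string otherwise. The output on $w$ is the concatenation of outputs of all configurations in the defined order. The number of pebbles is the maximal stack height. *)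

(* Defs.v *)
From mathcomp Require Import all_boot.
From Stdlib Require List.

Set Implicit Arguments.
Unset Strict Implicit.
Unset Printing Implicit Defensive.

(* Variables are de Bruijn indices: first-order variable i refers to   *)
(* the i-th entry of the first-order environment, second-order          *)
(* variable X to the X-th entry of the second-order environment.        *)
(* An atomic formula mentioning an unbound variable is false.           *)
Inductive mso (Sigma : Type) : Type :=
| MLe   : nat -> nat -> mso Sigma
| MLab  : Sigma -> nat -> mso Sigma
| MIn   : nat -> nat -> mso Sigma
| MNot  : mso Sigma -> mso Sigma
| MAnd  : mso Sigma -> mso Sigma -> mso Sigma
| MExFO : mso Sigma -> mso Sigma
| MExSO : mso Sigma -> mso Sigma.

Fixpoint msat (Sigma A : Type) (w : seq (Sigma + A))
    (fo : seq nat) (so : seq (nat -> bool)) (phi : mso Sigma) : Prop :=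
  match phi with
  | MLe i j =>
      match List.nth_error fo i, List.nth_error fo j with
      | Some p, Some q => (p <= q)%N
      | _, _ => False
      end
  | MLab a i =>
      match List.nth_error fo i with
      | Some p => List.nth_error w p = Some (inl a)
      | None => False
      end
  | MIn i k =>
      match List.nth_error fo i, List.nth_error so k with
      | Some p, Some X => X p = true
      | _, _ => False
      end
  | MNot psi => ~ msat w fo so psi
  | MAnd psi chi => msat w fo so psi /\ msat w fo so chi
  | MExFO psi => exists p, (p < size w)%N /\ msat w (p :: fo) so psi
  | MExSO psi => exists X : nat -> bool, msat w fo (X :: so) psi
  end.

(*  - ptdim q     : stack height of state q                             *)
(*  - ptuniv q    : universe formula phi_q(x_1..x_dim q)                *)
(*                  (free FO variables 0..dim q - 1 = the stack)         *)
(*  - ptord q q'  : formula psi_{q,q'}(x_1..x_dim q, y_1..y_dim q')     *)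
(*                  defining (q,xs) <= (q',ys); env = xs ++ ys           *)
(*  - ptout q     : Some g = output letter g; None = "atom under head"  *)
Record pebble_transducer (Sigma Gamma Q : finType) := PebbleTransducer {
  ptdim  : Q -> nat;
  ptuniv : Q -> mso Sigma;
  ptord  : Q -> Q -> mso Sigma;
  ptout  : Q -> option Gamma
}.

Section Semantics.
Variables (Sigma Gamma Q : finType) (A : Type).
Variable T : pebble_transducer Sigma Gamma Q.

Definition config := (Q * seq nat)%type.

Definition is_config (w : seq (Sigma + A)) (c : config) : Prop :=
  size c.2 = ptdim T c.1 /\ all (fun p => p < size w)%N c.2 /\
  msat w c.2 [::] (ptuniv T c.1).

Definition cle (w : seq (Sigma + A)) (c c' : config) : Prop :=
  msat w (c.2 ++ c'.2) [::] (ptord T c.1 c'.1).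

Definition stack_ok (u v : seq nat) : bool :=
  prefix u v || prefix v u ||
  ((size u == size v) && (take (size u).-1 u == take (size v).-1 v)).

Definition consecutive (w : seq (Sigma + A)) (c c' : config) : Prop :=
  is_config w c /\ is_config w c' /\ c <> c' /\ cle w c c' /\
  ~ (exists d, is_config w d /\ d <> c /\ d <> c' /\ cle w c d /\ cle w d c').

Definition valid_on (w : seq (Sigma + A)) : Prop :=
  (forall c, is_config w c -> cle w c c) /\
  (forall c c', is_config w c -> is_config w c' ->
      cle w c c' -> cle w c' c -> c = c') /\
  (forall c d e, is_config w c -> is_config w d -> is_config w e ->
      cle w c d -> cle w d e -> cle w c e) /\
  (forall c c', is_config w c -> is_config w c' -> cle w c c' \/ cle w c' c) /\
  (forall c c', consecutive w c c' -> stack_ok c.2 c'.2).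

Definition valid : Prop := forall w : seq (Sigma + A), valid_on w.

Definition conf_out (w : seq (Sigma + A)) (c : config) : seq (Gamma + A) :=
  match ptout T c.1 with
  | Some g => [:: inl g]
  | None =>
      match c.2 with
      | [::] => [::]
      | p0 :: _ =>
          match List.nth_error w (last p0 c.2) with
          | Some (inr a) => [:: inr a]
          | _ => [::]
          end
      end
  end.

Definition produces (w : seq (Sigma + A)) (o : seq (Gamma + A)) : Prop :=
  exists s : seq config,
    uniq s /\ (forall c, c \in s <-> is_config w c) /\
    (forall i j ci cj, (i < j)%N -> List.nth_error s i = Some ci ->
        List.nth_error s j = Some cj -> cle w ci cj) /\
    o = flatten (map (conf_out w) s).

Definition num_pebbles_le (k : nat) : Prop := forall q : Q, (ptdim T q <= k)%N.

Definition computes (f : seq A -> seq A) : Prop :=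
  forall w : seq A, produces (map inr w) (map inr (f w)).

End Semantics.

Definition atom_square (A : Type) (w : seq A) : seq A :=
  flatten [seq [:: a; b] | a <- w, b <- w].

(* Main.v *)
Require Import Defs.
From mathcomp Require Import all_boot.
From mathcomp Require Import zify.
Set Implicit Arguments. Unset Strict Implicit. Unset Printing Implicit Defensive.

Section Phi.
Variable Gamma : eqType.
Notation L := (Gamma + nat)%type.
Variable B : nat.
Definition dL : L := inr 0.
Definition win (v : seq L) (k : nat) : bool :=
  [&& k + 2*B < size v, (if nth dL v k is inr _ then true else false) &
      all (fun t => nth dL v (k + 2*t) == nth dL v k) (iota 0 B.+1)].
Definition Phi (v : seq L) := count (win v) (iota 0 (size v)).

Lemma count_le3 (T : Type) (a b c : pred T) s :
  (forall x, a x -> b x || c x) -> count a s <= count b s + count c s.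
Proof.
move=> H; elim: s => //= x s IH.
have := H x; case: (a x); case: (b x); case: (c x) => //= Hx; try lia.

Qed.

Lemma count_tail m c : count (fun k => m <= k + c) (iota 0 m) <= c.
Proof.
case: (leqP m c) => Hm.
  by apply: leq_trans (count_size _ _) _; rewrite size_iota.
have -> : m = (m - c) + c by lia.
rewrite iotaD count_cat.
have -> : count (fun k => m - c + c <= k + c) (iota 0 (m - c)) = 0.
  apply/eqP; rewrite -leqn0 leqNgt -has_count; apply/negP => /hasP [k].
  by rewrite mem_iota /= => Hk; lia.
by rewrite add0n; apply: leq_trans (count_size _ _) _; rewrite size_iota.
Qed.

Lemma Phi_cat u v : Phi (u ++ v) <= Phi u + Phi v + 2*B.
Proof.
rewrite /Phi size_cat iotaD count_cat add0n.
have E2 : count (win (u ++ v)) (iota (size u) (size v)) = count (win v) (iota 0 (size v)).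
  rewrite -[size u]addn0 iotaDl count_map; apply: eq_count => k /=.
  rewrite /win size_cat nth_cat.
  have -> : size u + k < size u = false by lia.
  have -> : size u + k - size u = k by lia.
  have -> : (size u + k + 2*B < size u + size v) = (k + 2*B < size v) by lia.
  congr [&& _ , _ & _]; apply: eq_all => t; rewrite nth_cat.
  have -> : size u + k + 2*t < size u = false by lia.
  by have -> : size u + k + 2*t - size u = k + 2*t by lia.
rewrite E2.
suff : count (win (u ++ v)) (iota 0 (size u)) <= count (win u) (iota 0 (size u)) + 2*B by lia.
apply: (leq_trans (@count_le3 _ (win (u ++ v)) (win u) (fun k => size u <= k + 2*B) (iota 0 (size u)) _)).
  move=> k; case: (leqP (size u) (k + 2*B)) => Hk; first by rewrite orbT.
  rewrite orbF /win size_cat nth_cat.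
  have -> : k < size u by lia.
  case/and3P => _ ->; move/allP => Hall; rewrite Hk.
  apply/allP => t Ht; have := Hall t Ht; rewrite !nth_cat.
  have Ht' : t < B.+1 by move: Ht; rewrite mem_iota.
  have -> : k + 2*t < size u by lia.
  by [].
by rewrite leq_add2l count_tail.
Qed.

Lemma Phi_size v : Phi v <= size v.
Proof. by apply: leq_trans (count_size _ _) _; rewrite size_iota. Qed.

End Phi.

Section Runs.
Variable Gamma : eqType.
Notation L := (Gamma + nat)%type.
Variables (X : eqType) (Q : finType) (state : X -> Q) (D : pred X) (key : X -> nat)
  (out : X -> seq L) (s0 : seq X).
Hypothesis H1 : forall c, c \in s0 -> size (out c) <= 1.
Hypothesis H2 : forall c, c \in s0 -> D c -> size (out c) = 1.
Hypothesis H3 : forall c c' y, c \in s0 -> c' \in s0 -> D c -> D c' -> key c = key c' ->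
  out c = [:: inr y] -> out c' = [:: inr y] -> state c = state c' -> c = c'.
Definition erel : rel X := fun c c' => D c ==> D c' ==> (key c == key c').

Lemma keys_eq c1 r : path erel c1 r -> all D (c1 :: r) -> forall c, c \in c1 :: r -> key c = key c1.
Proof.
elim: r c1 => [|c2 r IH] c1 /=.
  by move=> _ _ c; rewrite inE => /eqP ->.
case/andP => He Hp /and3P [D1 D2 Dr] c; rewrite inE => /orP [/eqP -> //|Hc].
move: He; rewrite /erel D1 D2 /= => /eqP ->.
by apply: IH => //; rewrite /= D2.
Qed.

Lemma flat_one r : {subset r <= s0} -> all D r ->
  flatten (map out r) = map (fun c => nth (dL Gamma) (out c) 0) r.
Proof.
elim: r => //= c r IH Hs /andP [Dc Dr].
rewrite IH //; last by move=> x Hx; apply: Hs; rewrite inE Hx orbT.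
have := H2 (Hs c (mem_head _ _)) Dc; case: (out c) => [|x [|]] //.
Qed.

Lemma run_Phi r : {subset r <= s0} -> all D r -> sorted erel r -> uniq r ->
  Phi #|Q| (flatten (map out r)) = 0.
Proof.
case: r => [|c1 r']; first by [].
set r := c1 :: r' => Hs HD Hso Hu.
have Hk := keys_eq Hso HD.
rewrite flat_one //.
set lt := fun c => nth (dL Gamma) (out c) 0.
apply/eqP; rewrite -leqn0 leqNgt -has_count; apply/negP => /hasP [k _].
rewrite /win size_map => /and3P [Hlt].
case E: (nth (dL Gamma) (map lt r) k) => [//|y] _ /allP Hall.
have Hin t : t < #|Q|.+1 -> k + 2 * t < size r by lia.
have Hout t : t < #|Q|.+1 -> out (nth c1 r (k + 2 * t)) = [:: inr y].
  move=> Ht; have := Hall t; rewrite mem_iota add0n => /(_ Ht) /eqP.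
  rewrite (nth_map c1) ?Hin // /lt => Hy.
  have Hm : nth c1 r (k + 2*t) \in r by apply: mem_nth; apply: Hin.
  have := H2 (Hs _ Hm) (allP HD _ Hm); case: (out _) Hy => [|x [|]] //= -> //.
pose g (t : 'I_#|Q|.+1) := state (nth c1 r (k + 2 * t)).
have Hg : injective g.
  move=> t t' /= Hst.
  have Mt := mem_nth c1 (Hin _ (ltn_ord t)).
  have Mt' := mem_nth c1 (Hin _ (ltn_ord t')).
  have := H3 (Hs _ Mt) (Hs _ Mt') (allP HD _ Mt) (allP HD _ Mt')
     (etrans (Hk _ Mt) (esym (Hk _ Mt'))) (Hout _ (ltn_ord t)) (Hout _ (ltn_ord t')) Hst.
  by move/eqP; rewrite nth_uniq ?Hin ?ltn_ord // => /eqP H; apply/eqP; rewrite -val_eqE /= -(eqn_pmul2l (isT : 0 < 2)) -(eqn_add2l k) H eqxx.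
by have := leq_card _ Hg; rewrite card_ord ltnn.
Qed.

Lemma main_count s r : {subset r ++ s <= s0} -> all D r -> sorted erel (r ++ s) ->
  uniq (r ++ s) ->
  Phi #|Q| (flatten (map out (r ++ s))) <= (4 * #|Q| + 1) * count (predC D) s.
Proof.
elim: s r => [|c s IH] r.
  by rewrite cats0 => Hs HD Hso Hu; rewrite run_Phi.
move=> Hs HD Hso Hu.
case Dc: (D c).
  rewrite -cat_rcons in Hs Hso Hu *; rewrite /= Dc /= add0n.
  by apply: IH => //; rewrite all_rcons Dc HD.
rewrite /= Dc /= map_cat flatten_cat /=.
have [Sr Scs] := cat_sorted2 Hso.
move: Hu; rewrite cat_uniq => /and3P [Ur _ Ucs].
have Hsr : {subset r <= s0} by move=> x Hx; apply: Hs; rewrite mem_cat Hx.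
have Hscs : {subset c :: s <= s0} by move=> x Hx; apply: Hs; rewrite mem_cat Hx orbT.
have P0 := run_Phi Hsr HD Sr Ur.
have P1 := Phi_cat #|Q| (flatten [seq out i | i <- r]) (out c ++ flatten [seq out i | i <- s]).
have P2 := Phi_cat #|Q| (out c) (flatten [seq out i | i <- s]).
have P3 := leq_trans (Phi_size #|Q| (out c)) (H1 (Hscs c (mem_head _ _))).
have P4 : Phi #|Q| (flatten (map out ([::] ++ s))) <= (4 * #|Q| + 1) * count (predC D) s.
  apply: IH => //.
  - by move=> x Hx; apply: Hscs; rewrite inE Hx orbT.
  - by move: Scs => /= /path_sorted.
  - by move: Ucs => /= /andP [].
rewrite /= in P4; rewrite mulnDr muln1.
move: P0 P1 P2 P3 P4; move: (Phi _ (flatten _ ++ _)) (Phi _ (flatten [seq out i | i <- r])) (Phi _ (out c ++ _)) (Phi _ (out c)) (Phi _ (flatten [seq out i | i <- s])) ((4 * #|Q| + 1) * count (predC D) s) => a1 a2 a3 a4 a5 a6; move: #|Q| => b; lia.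
Qed.
End Runs.

Section Sq.
Definition sq (T : Type) (u v : seq T) := flatten [seq [:: a; b] | a <- u, b <- v].

Lemma sq_cons (T : Type) (a : T) u v :
  sq (a :: u) v = flatten (map (fun b => [:: a; b]) v) ++ sq u v.
Proof. by rewrite /sq allpairs_cons flatten_cat. Qed.

Lemma map_sq (T U : Type) (g : T -> U) u v : map g (sq u v) = sq (map g u) (map g v).
Proof.
elim: u => [|a u IH] /=; first by [].
rewrite !sq_cons map_cat IH; congr (_ ++ _).
by elim: v {IH} => //= b v IHv; rewrite IHv.
Qed.

Lemma size_inner (T : Type) (a : T) v : size (flatten (map (fun b => [:: a; b]) v)) = 2 * size v.
Proof. by elim: v => //= b v IH; rewrite IH mulnS. Qed.

Lemma size_sq (T : Type) (u v : seq T) : size (sq u v) = 2 * (size u * size v).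
Proof.
elim: u => [|a u IH]; first by [].
by rewrite sq_cons size_cat size_inner IH /= mulSn mulnDr.
Qed.

Lemma nth_inner (T : Type) (d a : T) v j : j < size v ->
  nth d (flatten (map (fun b => [:: a; b]) v)) (2 * j) = a.
Proof.
elim: v j => [|b v IH] [|j] // Hj.
rewrite mulnS.
change (nth d (a :: b :: flatten (map (fun b => [:: a; b]) v)) (2*j).+2 = a).
exact: IH.
Qed.

Lemma nth_sq (T : Type) (d : T) u v i j : i < size u -> j < size v ->
  nth d (sq u v) (2 * (i * size v + j)) = nth d u i.
Proof.
elim: u i => [|a u IH] [|i] //= Hi Hj; rewrite sq_cons nth_cat size_inner.
  by rewrite mul0n add0n ltn_mul2l /= Hj nth_inner.
have -> : 2 * (i.+1 * size v + j) < 2 * size v = false.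
  by apply/negbTE; rewrite -leqNgt leq_mul2l mulSn -addnA leq_addr orbT.
have -> : 2 * (i.+1 * size v + j) - 2 * size v = 2 * (i * size v + j)
  by rewrite -mulnBr mulSn -addnA addKn.
exact: IH.
Qed.
End Sq.

Lemma nth_error_nth (T : Type) (x0 : T) s i : i < size s ->
  List.nth_error s i = Some (nth x0 s i).
Proof. by elim: s i => [|x s IH] [|i] //= /IH. Qed.

Lemma stack_ok2 (x y x' y' : nat) : stack_ok [:: x; y] [:: x'; y'] -> x = x'.
Proof.
rewrite /stack_ok /=.
by case/orP => [/orP [] /and3P [/eqP -> //] | /eqP [->]].
Qed.

Lemma map_flat (T U : Type) (g : T -> U) (ss : seq (seq T)) :
  map g (flatten ss) = flatten (map (map g) ss).
Proof. by elim: ss => //= x ss IH; rewrite map_cat IH. Qed.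

Lemma final_arith b :
  ((4*b+1)*b + b + 2) * ((4*b+1)*b + b + 2 - b) <= (4*b+1) * (b * ((4*b+1)*b + b + 2 + 1)) -> False.
Proof.
have -> : (4*b+1)*b + b + 2 - b = (4*b+1)*b + 2 by lia.
rewrite mulnA; move: ((4*b+1)*b) => C; nia.
Qed.

Theorem mainTheorem8 (A : Type) (HA : exists f : nat -> A, injective f)
    (Sigma Gamma Q : finType) (T : pebble_transducer Sigma Gamma Q) :
  valid A T -> num_pebbles_le T 2 -> ~ computes T (@atom_square A).
Proof.
move=> Hval Hpeb Hcomp.
case: HA => f finj.
set B := #|Q|.
set n := (4*B+1)*B + B + 2.
pose u := iota 0 n.
pose W : seq (Sigma + A) := map inr (map f u).
have [s [Hu [Hmem [Hord Ho]]]] := Hcomp (map f u).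
have [_ [Hanti [_ [_ Hstk]]]] := Hval W.
have HW : size W = n by rewrite /W !size_map size_iota.
have Hcs : forall c, c \in s -> size c.2 <= 2 /\ all (fun p => p < n) c.2.
  move=> c /Hmem [Hsz [Hall _]]; split; last by rewrite -HW.
  by rewrite Hsz; apply: Hpeb.
pose cout (c : config Q) : seq (Gamma + nat) :=
  match ptout T c.1 with
  | Some g => [:: inl g]
  | None => match c.2 with [::] => [::] | p0 :: _ => [:: inr (last p0 c.2)] end
  end.
pose lift (l : Gamma + nat) : Gamma + A :=
  match l with inl g => inl g | inr y => inr (f y) end.
have Hconf : forall c, c \in s -> conf_out T W c = map lift (cout c).
  move=> c /Hcs [_ Hall]; rewrite /conf_out /cout; case: (ptout T c.1) => [g|] //.
  move: Hall; case: (c.2) => [|p0 st] // Hall /=.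
  have Hl : last p0 st < n by apply: (allP Hall); exact: mem_last.
  rewrite (nth_error_nth (inr (f 0))) ?HW //.
  by rewrite /W (nth_map (f 0)) ?size_map ?size_iota // (nth_map 0) ?size_iota // nth_iota.
have liftinj : injective lift.
  move=> [g|y] [g'|y'] //= [E]; first by rewrite E.
  by rewrite (finj _ _ E).
have Hflat : flatten (map cout s) = map inr (sq u u).
  apply: (inj_map liftinj).
  have E1 : map (map lift) (map cout s) = map (conf_out T W) s.
    by rewrite -map_comp; apply/eq_in_map => c Hc /=; rewrite Hconf.
  rewrite map_flat E1 -Ho.
  have -> : map lift (map inr (sq u u)) = map inr (map f (sq u u)).
    by rewrite -!map_comp; apply: eq_map.
  by rewrite map_sq.
pose D := fun c : config Q => size c.2 == 2.
pose key := fun c : config Q => head 0 c.2.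
have H1 : forall c, c \in s -> size (cout c) <= 1.
  by move=> c _; rewrite /cout; case: (ptout T c.1) => //; case: (c.2).
have H2 : forall c, c \in s -> D c -> size (cout c) = 1.
  by move=> c _; rewrite /cout /D; case: (ptout T c.1) => //; case: (c.2).
have H3 : forall c c' y, c \in s -> c' \in s -> D c -> D c' -> key c = key c' ->
    cout c = [:: inr y] -> cout c' = [:: inr y] -> c.1 = c'.1 -> c = c'.
  move=> [q st] [q' st'] y _ _; rewrite /D /key /cout /=.
  case: st => [|x [|y1 [|]]] //; case: st' => [|x' [|y1' [|]]] // _ _ /= -> .
  move=> E1 E2 Eq; subst q'; move: E1 E2; case: (ptout T q) => // - [->] [->] //.
have Hso : sorted (erel D key) s.
  case Es : s => [|c0 s']; first by []. rewrite -Es.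
  apply/(sortedP c0) => i Hi.
  have Hi' : i < size s by apply: ltnW.
  set c := nth c0 s i; set c' := nth c0 s i.+1.
  have Mc : c \in s := mem_nth c0 Hi'.
  have Mc' : c' \in s := mem_nth c0 Hi.
  have Cc := (Hmem c).1 Mc.
  have Cc' := (Hmem c').1 Mc'.
  have Hcons : consecutive T W c c'.
    split; first exact: Cc. split; first exact: Cc'. split.
      by move/eqP; rewrite nth_uniq // (ltn_eqF (ltnSn i)).
    split; first exact: (Hord i i.+1 c c' (ltnSn i) (nth_error_nth c0 Hi') (nth_error_nth c0 Hi)).
    move=> [d [Hd [Hdc [Hdc' [Hcd Hdc2]]]]].
    have Md : d \in s by apply/Hmem.
    have Hm : index d s < size s by rewrite index_mem.
    have Ed := nth_index c0 Md.
    have NEd := nth_error_nth c0 Hm; rewrite Ed in NEd.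
    case: (ltngtP (index d s) i) => Hmi.
    - have := Hord _ _ d c Hmi NEd (nth_error_nth c0 Hi').
      by move=> Hdc3; apply: Hdc; apply: esym; apply: Hanti.
    - case: (ltngtP (index d s) i.+1) => Hmi2.
      + move: Hmi Hmi2; clear; lia.
      + have := Hord _ _ c' d Hmi2 (nth_error_nth c0 Hi) NEd.
        by move=> Hdc3; apply: Hdc'; apply: Hanti.
      + by apply: Hdc'; rewrite -Ed Hmi2.
    - by apply: Hdc; rewrite -Ed Hmi.
  have Hok := Hstk c c' Hcons.
  rewrite /erel /D /key; move: Hok.
  case: (c.2) => [|x [|y [|]]] //; case: (c'.2) => [|x' [|y' [|]]] //=.
  by move/stack_ok2 => ->; rewrite eqxx.
have Hmain := @main_count _ _ _ (fun c => c.1) D key cout s H1 H2 H3 s [::]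
  (fun c H => H) isT Hso Hu.
rewrite /= Hflat in Hmain.
have Hcnt : count (predC D) s <= B * (n + 1).
  rewrite -size_filter.
  pose LL := [seq (q, [::]) | q <- enum Q] ++ [seq (q, [:: x]) | q <- enum Q, x <- u].
  have HLL : size LL = B * (n + 1).
    by rewrite size_cat size_map size_allpairs -cardE size_iota mulnDr muln1 addnC.
  rewrite -HLL; apply: uniq_leq_size; first exact: filter_uniq.
  move=> [q st]; rewrite mem_filter => /andP [HnD Hc].
  have [Hsz Hall] := Hcs _ Hc.
  move: HnD Hsz Hall; clear Hc; rewrite /D /=; case: st => [|x [|y [|]]] //= _ _.
    by move=> _; rewrite mem_cat map_f // mem_enum.
  rewrite andbT => Hx; rewrite mem_cat; apply/orP; right.
  by apply: (allpairs_f (fun q x => (q, [:: x]))); rewrite ?mem_enum ?mem_iota.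
have Hlow : n * (n - B) <= Phi B (map (@inr Gamma nat) (sq u u)).
  set o := map (@inr Gamma nat) (sq u u).
  have Hso' : size o = 2 * (n * n) by rewrite size_map size_sq size_iota.
  have Hn : 0 < n by rewrite /n addn2.
  have Hno : forall i j, i < n -> j < n -> nth (dL Gamma) o (2 * (i * n + j)) = inr i.
    move=> i j Hi Hj.
    have Hk : 2 * (i * n + j) < size (sq u u).
      rewrite size_sq size_iota ltn_mul2l /=.
      apply: (@leq_trans (i.+1 * n)); last by rewrite leq_mul2r Hi orbT.
      by rewrite mulSn [n + _]addnC -addnS leq_add2l.
    rewrite /o (nth_map 0) // -{1}(size_iota 0 n) nth_sq ?size_iota //.
    by rewrite nth_iota.
  pose G := [seq 2 * (i * n + j) | i <- u, j <- iota 0 (n - B)].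
  have -> : n * (n - B) = size G by rewrite size_allpairs !size_iota.
  rewrite /Phi -size_filter; apply: uniq_leq_size.
    apply: allpairs_uniq; rewrite ?iota_uniq //.
    move=> [i j] [i' j'] /allpairsP [[a b] [Ha Hb [-> ->]]] /allpairsP [[a' b'] [Ha' Hb' [-> ->]]] /=.
    move: Ha Hb Ha' Hb'; rewrite !mem_iota !add0n => Ha Hb Ha' Hb'.
    move/eqP; rewrite eqn_pmul2l // => /eqP E.
    have Hbn : b < n by apply: (leq_trans Hb); apply: leq_subr.
    have Hbn' : b' < n by apply: (leq_trans Hb'); apply: leq_subr.
    have Ebb : b = b'.
      have := modnMDl a b n; rewrite E modnMDl (modn_small Hbn) (modn_small Hbn').
      by move=> ->.
    subst b'; move/eqP: E; rewrite eqn_add2r eqn_pmul2r // => /eqP ->.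
    by [].
  move=> k /allpairsP [[i j] [Hi Hj ->]] /=.
  move: Hi Hj; rewrite !mem_iota !add0n /= => Hi Hj.
  rewrite mem_filter mem_iota add0n Hso'.
  have Hk : 2 * (i * n + j) + 2 * B < 2 * (n * n).
    rewrite -mulnDr ltn_mul2l /= -addnA.
    apply: (@leq_trans (i.+1 * n)); last by rewrite leq_mul2r Hi orbT.
    rewrite mulSn [n + _]addnC -addnS leq_add2l; move: Hj; clear; lia.
  have Hk' : 2 * (i * n + j) < 2 * (n * n) by apply: leq_ltn_trans Hk; apply: leq_addr.
  have HA : all (fun t => nth (dL Gamma) o (2 * (i * n + j) + 2 * t) == nth (dL Gamma) o (2 * (i * n + j))) (iota 0 B.+1).
    apply/allP => t; rewrite mem_iota add0n => Ht.
    have -> : 2 * (i * n + j) + 2 * t = 2 * (i * n + (j + t)) by rewrite mulnDr mulnDr mulnDr addnA.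
    rewrite !Hno //; move: Hj Ht; clear; lia.
  rewrite Hk' andbT /win Hso' Hk HA andbT Hno //; move: Hj; clear; lia.
have := leq_trans Hlow (leq_trans Hmain (leq_mul (leqnn _) Hcnt)).
exact: final_arith.
Qed.
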